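(* Let $s\in\{0,1\}^n$, $p\in[0,1)$, $x\in\{0,1\}^k$ with $k\ge2$, and $i\in\{1,\dots,n-k+1\}$. Then $$K_{s,x}[i]=\frac{1}{(1-p)^k}\left(P_{s,x}[i]-\sum_{\ell=k+1}^{n}\sum_{y\in Y_\ell(x)}(-1)^{|y|-|x|+1}P_{s,y}[i]\binom{y}{x}'\left(\frac{p}{1-p}\right)^{\ell-k}\right).$$
   Context: Deletion channel: a trace $\tilde S$ of $s$ is obtained by deleting each bit of $s$ independently with probability $p$. Strings are indexed from 1, $s[a:b]=(s[a],\dots,s[b])$, and for a string $z$, $z[2:-2]$ denotes $z$ with its first and last symbols removed. For strings $y,z$, $\binom{y}{z}$ denotes the number of ways to delete $|y|-|z|$ symbols of $y$ to obtain $z$ (i.e., the number of index sets at which $z$ occurs as a subsequence of $y$), and $\binom{y}{z}'=\binom{y[2:-2]}{z[2:-2]}$. For a string $x$ of length $k$ and $\ell\ge k$, $Y_\ell(x)$ is the set of binary strings $y$ of length $\ell$ that are supersequences of $x$ with $y[1]=x[1]$ and $y[\ell]=x[k]$. For any binary string $x$ of length $m$, $K_{s,x}[i]=\sum_{j\ge i}\binom{j-1}{i-1}(1-p)^{i-1}p^{j-i}\mathbb 1\{s[j:j+m-1]=x\}$ (terms with $j+m-1>n$ are zero), and $P_{s,x}[i]=\Pr(\tilde S[i:i+m-1]=x)$ (zero if the trace is shorter than $i+m-1$). *)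

(* Defs.v *)
(* Binary strings are [seq bool], indexed from 1 in the
   paper; we translate the 1-indexed window s[a:a+m-1] as
   take m (drop a.-1 s). *)
From mathcomp Require Import all_boot all_order all_algebra.
Set Implicit Arguments. Unset Strict Implicit. Unset Printing Implicit Defensive.
Import GRing.Theory Num.Theory.
Local Open Scope ring_scope.

Definition occurs_at (s x : seq bool) (a : nat) : bool :=
  [&& (0 < a)%N, (a + size x <= size s + 1)%N & take (size x) (drop a.-1 s) == x].

(* Deletion channel: a keep-mask d (d_j = true iff bit j survives) has
   probability (1-p)^{#kept} p^{#deleted}; the trace is mask d s. *)
Definition mask_weight (R : nzRingType) (p : R) (n : nat) (d : seq bool) : R :=
  (1 - p) ^+ count id d * p ^+ (n - count id d).

Definition Ptrace (R : nzRingType) (p : R) (s x : seq bool) (i : nat) : R :=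
  \sum_(d : (size s).-tuple bool)
     mask_weight p (size s) d * (occurs_at (mask d s) x i)%:R.

Definition Kstat (R : nzRingType) (p : R) (s x : seq bool) (i : nat) : R :=
  \sum_(i <= j < (size s).+1)
     ('C(j.-1, i.-1))%:R * (1 - p) ^+ i.-1 * p ^+ (j - i) * (occurs_at s x j)%:R.

Definition sbinom (y z : seq bool) : nat :=
  #|[pred m : (size y).-tuple bool | mask m y == z]|.

Definition strip (z : seq bool) : seq bool := take (size z).-2 (drop 1 z).

Definition sbinom' (y z : seq bool) : nat := sbinom (strip y) (strip z).

(* Membership in Y_l(x) for y of length l: supersequence of x, same first and last symbol. *)
Definition inY (x y : seq bool) : bool :=
  [&& subseq x y, head false y == head false x & last false y == last false x].

(* Main.v *)
Require Import Defs.
From mathcomp Require Import all_boot all_order all_algebra ring lra zify.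
Import GRing.Theory Num.Theory.
Local Open Scope ring_scope.
Set Implicit Arguments. Unset Strict Implicit.

Section S.
Variable R : realFieldType.
Variable p : R.

Lemma sum_tuple_cons (n : nat) (F : seq bool -> R) :
  \sum_(d : n.+1.-tuple bool) F d =
  \sum_(d : n.-tuple bool) (F (true :: d) + F (false :: d)).
Proof.
rewrite (reindex (fun bt : bool * n.-tuple bool => [tuple of bt.1 :: bt.2])) /=.
  rewrite -(pair_big xpredT xpredT (fun b (d : n.-tuple bool) => F (b :: d))) /=.
  rewrite big_bool /= -big_split /=. by [].
apply: onW_bij.
exists (fun t : n.+1.-tuple bool => (thead t, [tuple of behead t])).
  by case=> b d /=; rewrite theadE; congr pair; apply: val_inj.
by move=> t /=; apply: val_inj; rewrite /= [in RHS](tuple_eta t).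
Qed.

Definition E (s : seq bool) (f : seq bool -> R) : R :=
  \sum_(d : (size s).-tuple bool) mask_weight p (size s) d * f (mask d s).

Lemma E_nil f : E [::] f = f [::].
Proof.
rewrite /E /= (big_pred1 [tuple]) /=.
  by rewrite /mask_weight /= !expr0 !mul1r.
move=> t; apply/esym/eqP; exact: tuple0.
Qed.

Lemma E_cons b s f :
  E (b :: s) f = p * E s f + (1 - p) * E s (fun t => f (b :: t)).
Proof.
rewrite /E (sum_tuple_cons (size s) (fun d => mask_weight p (size s).+1 d * f (mask d (b :: s)))) addrC !mulr_sumr -big_split /=.
apply: eq_bigr => d _.
have hc : (count id d <= size s)%N by rewrite -[X in (_ <= X)%N](size_tuple d) count_size.
rewrite /mask_weight /= add0n subSS subSn // !exprS.
congr (_ + _); rewrite !mulrA //.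
all: ring.
Qed.

Lemma E_ext s f g : (forall t, (size t <= size s)%N -> f t = g t) -> E s f = E s g.
Proof.
move=> H; apply: eq_bigr => d _; congr (_ * _); apply: H.
by rewrite size_mask ?size_tuple // -[X in (_ <= X)%N](size_tuple d) count_size.
Qed.

Lemma E_const1 s : E s (fun _ => 1) = 1.
Proof.
elim: s => [|b s IH]; first by rewrite E_nil.
by rewrite E_cons IH !mulr1 addrC subrK.
Qed.

Lemma E_sumE (I : Type) (r : seq I) (P : pred I) s (F : I -> seq bool -> R) :
  \sum_(i <- r | P i) E s (F i) = E s (fun t => \sum_(i <- r | P i) F i t).
Proof.
rewrite /E exchange_big /=; apply: eq_bigr => d _; by rewrite mulr_sumr.
Qed.

Lemma E_scale a c s f : a * E s f * c = E s (fun t => a * f t * c).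
Proof.
rewrite /E mulr_sumr mulr_suml; apply: eq_bigr => d _; ring.
Qed.

Lemma E_sub s f g : E s f - E s g = E s (fun t => f t - g t).
Proof.
rewrite /E -sumrB; apply: eq_bigr => d _; by rewrite mulrBr.
Qed.

End S.

Section S2.
Variable R : realFieldType.
Variable p : R.

Definition Kt (s x : seq bool) (i j : nat) : R :=
  ('C(j.-1, i.-1))%:R * (1 - p) ^+ i.-1 * p ^+ (j - i) * (occurs_at s x j)%:R.

Lemma occ0 s x : occurs_at s x 0 = false.
Proof. by []. Qed.

Lemma occS b t y j : occurs_at (b :: t) y j.+2 = occurs_at t y j.+1.
Proof. by rewrite /occurs_at /= !addSn. Qed.

Lemma Kt0 s x i : Kt s x i 0 = 0.
Proof. by rewrite /Kt occ0 mulr0. Qed.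

Lemma K_ord s x i : (1 <= i)%N -> Kstat p s x i = \sum_(j < (size s).+1) Kt s x i j.
Proof.
move=> hi; rewrite /Kstat big_geq_mkord big_mkcond; apply: eq_bigr => j _.
case: leqP => // hj; rewrite /=; case: (nat_of_ord j) hj => [|j'] hj; first by rewrite Kt0.
rewrite /Kt bin_small ?mul0r //; lia.
Qed.

Lemma K_consS b s x i : (2 <= i)%N ->
  Kstat p (b :: s) x i = p * Kstat p s x i + (1 - p) * Kstat p s x i.-1.
Proof.
case: i => [|[|i']] // _.
rewrite !K_ord //= big_ord_recl Kt0 add0r big_ord_recl.
rewrite [X in X + _](_ : _ = 0); last by rewrite /Kt /= bin_small // !mul0r.
rewrite add0r !big_ord_recl !Kt0 !add0r !mulr_sumr -big_split /=.
apply: eq_bigr => j _; rewrite /Kt /= /bump /= !add1n occS /=.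
set o := (occurs_at s x j.+1)%:R.
rewrite binS natrD !add0n !subSS.
case: (leqP j i') => hj.
  rewrite (@bin_small j i'.+1) ?ltnS // ?add0r.
  rewrite !exprS; ring.
have -> : (j - i' = (j - i'.+1).+1)%N by lia.
rewrite !exprS; ring.
Qed.

Lemma K_cons1 b s x :
  Kstat p (b :: s) x 1 = (occurs_at (b :: s) x 1)%:R + p * Kstat p s x 1.
Proof.
rewrite !K_ord //= big_ord_recl Kt0 add0r big_ord_recl.
rewrite big_ord_recl Kt0 add0r mulr_sumr; congr (_ + _).
  by rewrite /Kt /= !expr0 !mul1r.
apply: eq_bigr => j _; rewrite /Kt /= /bump /= !add1n occS /= !bin0 !subn1 /=.
rewrite !expr0 exprS; ring.
Qed.

End S2.
Section S3.
Variable R : realFieldType.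
Variable p : R.
Hypothesis hq : 1 - p != 0.

Lemma E_eq s f g : (forall t, f t = g t) -> E p s f = E p s g.
Proof. by move=> H; apply: E_ext => t _; apply: H. Qed.

Lemma E_lin2 s a c f g :
  E p s (fun t => a * f t + c * g t) = a * E p s f + c * E p s g.
Proof.
rewrite /E !mulr_sumr -big_split; apply: eq_bigr => d _ /=; ring.
Qed.

Definition rr : R := p / (1 - p).

Fixpoint A (t z : seq bool) : R :=
  match t with
  | [::] => (z == [::])%:R
  | b :: t' => match z with
               | [::] => 1
               | c :: z' => - rr * A t' z + (b == c)%:R * A t' z'
               end
  end.

Lemma A_nil t : A t [::] = 1.
Proof. by case: t. Qed.

Lemma prefix_lemma s z :
  E p s (fun t => A t z) = (1 - p) ^+ (size z) * (take (size z) s == z)%:R.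
Proof.
elim: s z => [|b s IH] z.
  by rewrite E_nil; case: z => [|c z] /=; rewrite ?mulr1 ?mulr0 // expr0 mul1r.
rewrite E_cons; case: z => [|c z'].
  rewrite (E_eq _ (g := fun _ => 1)); last by move=> t; rewrite A_nil.
  rewrite (E_eq _ (f := fun t => A (b :: t) [::]) (g := fun _ => 1)) //.
  by rewrite E_const1 /= expr0 !mulr1 addrC subrK.
rewrite (E_eq _ (f := fun t => A (b :: t) (c :: z'))
  (g := fun t => - rr * A t (c :: z') + (b == c)%:R * A t z')) //.
rewrite E_lin2 !IH /= eqseq_cons /rr.
case: (b == c); case: (take _ s == z'); rewrite /= ?mul1r ?mul0r ?mulr0 ?addr0 exprS;
  field; by [].
Qed.

End S3.
Lemma sbinomR (R : realFieldType) v u :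
  (sbinom v u)%:R = \sum_(m : (size v).-tuple bool) ((mask m v == u)%:R : R).
Proof.
rewrite /sbinom -sum1_card natr_sum big_mkcond /=; apply: eq_bigr => m _.
by rewrite inE; case: (_ == _).
Qed.

Lemma sbinom_small v u : (size v < size u)%N -> sbinom v u = 0%N.
Proof.
move=> h; apply/eqP; rewrite -(eqr_nat rat) (sbinomR rat) big1 // => m _.
case: eqP => // e; exfalso; move: h; rewrite -e size_mask ?size_tuple //.
by rewrite ltnNge -[X in (_ <= X)%N](size_tuple m) count_size.
Qed.

Lemma sbinom_notsub v u : ~~ subseq u v -> sbinom v u = 0%N.
Proof.
move=> h; apply/eqP; rewrite -(eqr_nat rat) (sbinomR rat) big1 // => m _.
case: eqP => // e; exfalso; move/negP: h; apply; rewrite -e; exact: mask_subseq.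
Qed.

Section S4.
Variable R : realFieldType.

Lemma sbinom_cons c v u :
  ((sbinom (c :: v) u)%:R : R) = (sbinom v u)%:R +
    (if u is c' :: u' then (c == c')%:R * (sbinom v u')%:R else 0).
Proof.
rewrite !sbinomR (sum_tuple_cons (size v)
  (fun m => ((mask m (c :: v) == u)%:R : R))) big_split /= addrC; congr (_ + _).
case: u => [|c' u']; first by rewrite big1.
rewrite sbinomR mulr_sumr; apply: eq_bigr => m _.
by rewrite eqseq_cons; case: (c == c'); rewrite /= ?mul1r ?mul0r.
Qed.

Lemma sbinom_eqsize v u : size v = size u -> ((sbinom v u)%:R : R) = (v == u)%:R.
Proof.
elim: v u => [|c v IH] [|c' u] //= h.
  rewrite sbinomR (big_pred1 [tuple]) //= => t; apply/esym/eqP; exact: tuple0.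
rewrite sbinom_cons sbinom_small ?h // add0r IH; last by case: h.
by rewrite eqseq_cons; case: (c == c'); rewrite /= ?mul1r ?mul0r.
Qed.

End S4.
Definition init (w : seq bool) := take (size w).-1 w.

Lemma init_cons b w : w != [::] -> init (b :: w) = b :: init w.
Proof. by case: w => [|c w] //= _; rewrite /init /=. Qed.

Lemma size_init w : size (init w) = (size w).-1.
Proof. by rewrite /init size_takel // leq_pred. Qed.

Lemma last_ne (b c : bool) w : w != [::] -> last b w = last c w.
Proof. by case: w. Qed.

Lemma sbinom_nil (R : realFieldType) v : ((sbinom v [::])%:R : R) = 1.
Proof.
elim: v => [|c v IH]; first by rewrite sbinom_eqsize.
by rewrite sbinom_cons IH addr0.
Qed.

Section S5.
Variable R : realFieldType.
Variable p : R.

Definition Sf (t z : seq bool) : R :=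
  \sum_(1 <= m < (size t).+1) (- rr p) ^+ (m - size z)
     * (last false (take m t) == last false z)%:R
     * (sbinom (init (take m t)) (init z))%:R.

Lemma A_S t z : z != [::] -> A p t z = Sf t z.
Proof.
elim: t z => [|b t IH] z hz.
  by rewrite /Sf big_geq //; case: z hz.
case: z hz => [|c z'] // _.
rewrite /= /Sf /= big_nat_recl // IH //.
case: (eqVneq z' [::]) => [->|hz'].
  rewrite A_nil mulr1 /= take0 subnn expr0 mul1r /init /= sbinom_nil mulr1.
  rewrite addrC; congr (_ + _); rewrite /Sf mulr_sumr; apply: eq_big_nat => m /andP [h1 h2].
  have hw : take m t != [::] by rewrite -size_eq0 size_takel //; lia.
  rewrite /= (last_ne b false hw) sbinom_nil /= !mulr1 subn1 /=.
  case: m h1 {h2 hw} => // m _; rewrite subn1 /= exprS mulrA //.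
  by rewrite sbinom_nil mulr1.
rewrite IH // /= take0 [init [:: b]]/init /= init_cons // sbinom_small /=; last first.
  by rewrite size_init; case: z' hz'.
rewrite mulr0 add0r /Sf mulr_sumr mulr_sumr -big_split /=.
apply: eq_big_nat => m /andP [h1 h2].
have hw : take m t != [::] by rewrite -size_eq0 size_takel //; lia.
have hsw : size (take m t) = m by rewrite size_takel //; lia.
rewrite (last_ne b false hw) (last_ne c false hz') (init_cons b hw) (init_cons c hz').
rewrite sbinom_cons subSS mulrDr.
case: (leqP m (size z')) => hm.
  rewrite (sbinom_small (v := init (take m t))) ?mulr0 ?add0r; last first.
    have : (0 < size z')%N by case: (z') hz'.
    rewrite /= !size_init hsw => hz; rewrite prednK //; case: (m) h1 hm => //= m1 _ hm1; lia.
  ring.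
have -> : (m - size z' = (m - (size z').+1).+1)%N by lia.
rewrite exprS; ring.
Qed.

End S5.
Lemma init_belast c w : init (c :: w) = belast c w.
Proof.
elim: w c => [|d w IH] c //=.
by rewrite /init /= -IH.
Qed.

Lemma rcons_init w : w != [::] -> w = rcons (init w) (last false w).
Proof. case: w => [|c w] // _; by rewrite init_belast -lastI. Qed.

Lemma inY_sb (R : realFieldType) a b v x' : v != [::] -> x' != [::] ->
  ((inY (a :: x') (b :: v))%:R * (sbinom' (b :: v) (a :: x'))%:R : R) =
  (b == a)%:R * (last false v == last false x')%:R * (sbinom (init v) (init x'))%:R.
Proof.
move=> hv hx.
have -> : sbinom' (b :: v) (a :: x') = sbinom (init v) (init x').
  by rewrite /sbinom' /strip /init /= !drop0.
rewrite /inY /= (last_ne b false hv) (last_ne a false hx).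
case: (boolP (subseq (init x') (init v))) => hs; last first.
  by rewrite sbinom_notsub // !mulr0.
have Hsub : last false v = last false x' -> subseq x' v.
  move=> he; rewrite (rcons_init hv) (rcons_init hx) he -!cats1.
  by apply: cat_subseq.
move: Hsub; case: (last false v) (last false x') => [] [] Hsub;
  case: a b => [] []; (try rewrite (Hsub erefl)); rewrite /= ?mulr0n ?mulr1n ?mul0r ?mul1r ?mulr0 ?mulr1 ?andbF //.
all: by rewrite -[nat_of_bool false]/0%N mul0r.
Qed.

Lemma sum_tuple_eq (R : realFieldType) l (P : pred (seq bool)) (F : seq bool -> R)
    (w : seq bool) :
  \sum_(y : l.-tuple bool | P y) (w == y)%:R * F y = ((size w == l) && P w)%:R * F w.
Proof.
case: (eqVneq (size w) l) => hw /=; last first.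
  rewrite mul0r big1 // => y _; case: eqP => [e|]; last by rewrite mul0r.
  by move: hw; rewrite e size_tuple eqxx.
have hw' : size w == l by apply/eqP.
pose wt := Tuple hw'.
case: (boolP (P w)) => hP /=; last first.
  rewrite mul0r big1 // => y hy; case: eqP => [e|]; last by rewrite mul0r.
  by move: hP; rewrite e hy.
rewrite (bigD1 wt) //= eqxx mul1r big1 ?addr0 // => y /andP [_ hy].
case: eqP => [e|]; last by rewrite mul0r.
by exfalso; move/eqP: hy; apply; apply: val_inj.
Qed.

Lemma occ1 u y : occurs_at u y 1 = (take (size y) u == y).
Proof.
rewrite /occurs_at /= drop0.
case: eqP => [e|]; last by rewrite andbF.
rewrite andbT; have := congr1 (@size bool) e; rewrite size_take.
case: ltnP => h e2; lia.
Qed.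
Section S7.
Variable R : realFieldType.
Variable p : R.
Hypothesis hq : 1 - p != 0.

Definition occR (t y : seq bool) (i : nat) : R := (occurs_at t y i)%:R.

Definition G (N : nat) (x : seq bool) (i : nat) (t : seq bool) : R :=
  occR t x i -
  \sum_((size x).+1 <= l < N.+1)
    \sum_(y : l.-tuple bool | inY x y)
      (-1) ^+ (l - size x + 1) * occR t y i * (sbinom' y x)%:R
        * (p / (1 - p)) ^+ (l - size x).

Lemma G_nil N x i : (1 <= i)%N -> (1 <= size x)%N -> G N x i [::] = 0.
Proof.
move=> hi hx; rewrite /G /occR.
have occn (y : seq bool) : (1 <= size y)%N -> occurs_at [::] y i = false.
  by move=> hy; rewrite /occurs_at /=; apply/negbTE; rewrite negb_and; apply/orP; right; lia.
rewrite occn //= big_nat_cond big1 ?subr0 // => l /andP [/andP [hl _] _]; rewrite big1 // => y _.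
rewrite occn ?size_tuple /= ?mulr0 ?mul0r //; lia.
Qed.

Lemma G_shift N x i b t : G N x i.+2 (b :: t) = G N x i.+1 t.
Proof.
rewrite /G /occR occS; congr (_ - _); apply: eq_bigr => l _; apply: eq_bigr => y _.
Qed.

End S7.
Section S8.
Variable R : realFieldType.
Variable p : R.
Hypothesis hq : 1 - p != 0.

Lemma inner_sum (x u : seq bool) l (e d : R) :
  \sum_(y : l.-tuple bool | inY x y) e * occR R u y 1 * (sbinom' y x)%:R * d =
  ((size (take l u) == l) && inY x (take l u))%:R * (e * (sbinom' (take l u) x)%:R * d).
Proof.
rewrite -(@sum_tuple_eq R l (inY x) (fun y => e * (sbinom' y x)%:R * d)); apply: eq_bigr => y _.
by rewrite /occR occ1 size_tuple; ring.
Qed.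

Definition Tm (t z : seq bool) (m : nat) : R :=
  (- rr p) ^+ (m - size z) * (last false (take m t) == last false z)%:R
    * (sbinom (init (take m t)) (init z))%:R.

Lemma Sf_Tm t z : Sf p t z = \sum_(1 <= m < (size t).+1) Tm t z m.
Proof. by []. Qed.

Lemma Tm_small t z m : (1 <= m)%N -> (m < size z)%N -> Tm t z m = 0.
Proof.
move=> h1 h2; rewrite /Tm sbinom_small ?mulr0 // !size_init size_take.
case: (ltnP m (size t)) => hh; rewrite -!subn1; lia.
Qed.

Lemma Tm_eq t z : z != [::] -> (size z <= size t)%N -> Tm t z (size z) = (take (size z) t == z)%:R.
Proof.
move=> hz hzt; rewrite /Tm subnn expr0 mul1r.
have hw : size (take (size z) t) = size z by rewrite size_takel.
have hw0 : take (size z) t != [::] by rewrite -size_eq0 hw size_eq0.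
rewrite sbinom_eqsize; last by rewrite !size_init hw.
rewrite -natrM mulnb; congr (_%:R).
set w := take (size z) t in hw0 *.
have -> : (w == z) = (rcons (init w) (last false w) == rcons (init z) (last false z)).
  by rewrite -(rcons_init hw0) -(rcons_init hz).
by rewrite eqseq_rcons andbC.
Qed.

Lemma G1_cons N (a b : bool) (x' t : seq bool) : x' != [::] -> (size t < N)%N ->
  G p N (a :: x') 1 (b :: t) = (b == a)%:R * Sf p t x'.
Proof.
move=> hx ht; rewrite /G.
under eq_bigr => l _ do rewrite inner_sum.
have hx1 : (1 <= size x')%N by case: (x') hx.
rewrite /occR occ1 /= eqseq_cons.
rewrite big_add1 /= -/(size (a :: x')) /=.
have term : forall m, ((size x').+1 <= m < N)%N ->
  (((size (take m t)).+1 == m.+1) && inY (a :: x') (b :: take m t))%:R *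
  ((-1) ^+ (m.+1 - (size x').+1 + 1) * (sbinom' (b :: take m t) (a :: x'))%:R *
   (p / (1 - p)) ^+ (m.+1 - (size x').+1))
  = (b == a)%:R * - (if (m < (size t).+1)%N then Tm t x' m else 0).
  move=> m /andP [h1 h2] /=.
  case: ltnP => hm; last first.
    rewrite size_take; case: ltnP => hmt; first lia.
    by rewrite eqSS (_ : (size t == m) = false) ?mul0r ?oppr0 ?mulr0 //; apply/negbTE; lia.
  have hv : size (take m t) = m by rewrite size_takel //.
  have hv0 : take m t != [::] by rewrite -size_eq0 hv; apply/eqP; lia.
  rewrite hv eqxx /= subSS.
  rewrite (_ : forall u v w z : R, u * (v * w * z) = v * z * (u * w)); last by move=> *; ring.
  rewrite inY_sb // /Tm /rr.
  have -> : (m - size x' + 1 = (m - size x').+1)%N by rewrite addn1.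
  rewrite exprS (exprNn (p / (1 - p))); ring.
rewrite (eq_big_nat _ _ term) -mulr_sumr -mulnb natrM sumrN mulrN opprK -mulrDr.
congr (_ * _).
case: (leqP (size x') (size t)) => hxt; last first.
  have -> : (take (size x') t == x') = false.
    apply/negbTE/negP => /eqP e; have := congr1 (@size bool) e; rewrite size_take.
    case: ltnP => h e2; first by have := ltn_trans h hxt; rewrite ltnn.
    by move: hxt; rewrite e2 ltnn.
  rewrite add0r big_nat_cond big1; last first.
    move=> i /andP [/andP [h1 h2] _]; case: ifP => // h3; lia.
  rewrite Sf_Tm big_nat_cond big1 // => i /andP [/andP [h1 h2] _].
  apply: Tm_small => //; lia.
rewrite -Tm_eq //.
have -> : Sf p t x' = \sum_(1 <= i < N) (if (i < (size t).+1)%N then Tm t x' i else 0).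
  by rewrite Sf_Tm (big_nat_widen _ _ N) // big_mkcond.
rewrite [RHS](big_cat_nat _ (n := size x')) //=; last lia.
rewrite [X in _ = X + _]big_nat_cond [X in _ = X + _]big1 ?add0r; last first.
  move=> i /andP [/andP [h1 h2] _]; case: ifP => // _; apply: Tm_small => //.
rewrite [in RHS]big_ltn; last lia.
by rewrite ifT //; lia.
Qed.

End S8.
Section S9.
Variable R : realFieldType.
Variable p : R.
Hypothesis hq : 1 - p != 0.
Variable x : seq bool.
Hypothesis hx : (2 <= size x)%N.

Lemma E_mull s a f : E p s (fun t => a * f t) = a * E p s f.
Proof. rewrite /E mulr_sumr; apply: eq_bigr => d _; ring. Qed.

Lemma mainE N s : (size s <= N)%N -> forall i, (1 <= i)%N ->
  E p s (G p N x i) = (1 - p) ^+ (size x) * Kstat p s x i.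
Proof.
elim: s => [|b s IH] hs i hi.
  rewrite E_nil G_nil //; last lia.
  by rewrite /Kstat big_geq ?mulr0.
have hs' : (size s <= N)%N by apply: ltnW.
rewrite E_cons.
case: i hi => [|[|i']] // _.
  rewrite IH //.
  case: x hx => [|a x'] // hx2.
  have hx' : x' != [::] by case: (x') hx2.
  rewrite (E_ext p (g := fun t => (b == a)%:R * Sf p t x')); last first.
    move=> t ht; apply: G1_cons => //; by apply: leq_ltn_trans ht hs.
  rewrite E_mull (E_eq p _ (g := fun t => A p t x')); last by move=> t; rewrite A_S.
  rewrite prefix_lemma // K_cons1 /occR occ1 /= eqseq_cons -mulnb natrM exprS.
  ring.
rewrite (E_eq p _ (f := fun t => G p N x i'.+2 (b :: t)) (g := G p N x i'.+1)); last first.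
  by move=> t; rewrite G_shift.
rewrite !IH //.
rewrite K_consS //=; ring.
Qed.

End S9.

Lemma E_scale4 (R : realFieldType) (p a c d : R) s f :
  a * E p s f * c * d = E p s (fun t => a * f t * c * d).
Proof. rewrite /E mulr_sumr mulr_suml mulr_suml; apply: eq_bigr => m _; ring. Qed.

Unset Implicit Arguments.
Set Strict Implicit.

Theorem lemma1 (R : realFieldType) (n : nat) (s : seq bool) (p : R)
    (k : nat) (x : seq bool) (i : nat) :
  size s = n -> 0 <= p -> p < 1 ->
  size x = k -> (2 <= k)%N ->
  (1 <= i)%N -> (i <= n - k + 1)%N ->
  Kstat p s x i =
    ((1 - p) ^+ k)^-1 *
    (Ptrace p s x i -
     \sum_(k.+1 <= l < n.+1)
       \sum_(y : l.-tuple bool | inY x y)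
         (-1) ^+ (l - k + 1) * Ptrace p s y i * (sbinom' y x)%:R
           * (p / (1 - p)) ^+ (l - k)).
Proof.
move=> hn hp0 hp1 hk h2k hi _; subst n k.
have hq : 1 - p != 0 by apply/eqP => e; lra.
have hP : forall y, Ptrace p s y i = E p s (fun t => occR R t y i) by [].
under eq_bigr => l _ do under eq_bigr => y _ do rewrite hP E_scale4.
under eq_bigr => l _ do rewrite E_sumE.
rewrite E_sumE hP E_sub.
rewrite (_ : E p s _ = E p s (G p (size s) x i)) //.
rewrite mainE // mulKf //; exact: expf_neq0.
Qed.
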